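(* Let $(Y^*,Y,X,W)$ be random variables with $Y^*\in\{0,1\}$ (true, unobserved outcome), $Y\in\{0,1\}$ (observed, possibly misreported outcome), covariates $X\in\mathcal X$, and $W$ taking values in a finite set of real numbers $\mathcal W=\{w_1,\dots,w_l\}$. Write $p^*(x)=\Pr(Y^*=1\mid X=x)$, $p_W(x,w)=\Pr(Y=1\mid X=x,W=w)$, and $$\underline p_w(x,w)=\inf_{\tilde w\in\mathcal W,\ \tilde w\le w}p_W(x,\tilde w),\qquad \bar p_w(x,w)=\sup_{\tilde w\in\mathcal W,\ \tilde w\le w}p_W(x,\tilde w).$$ Assume: (i) (Exclusion) $\Pr(Y^*=1\mid X=x,W=w)=p^*(x)$ for all $x\in\mathcal X$, $w\in\mathcal W$; (ii) (Monotonicity) for all $x\in\mathcal X$, $y\in\{0,1\}$ and $w_1>w_2$ in $\mathcal W$, $\Pr(Y=1-y\mid Y^*=y,x,w_1)\le\Pr(Y=1-y\mid Y^*=y,x,w_2)$; (iii) (Degree of misreporting) $\Pr(Y=1\mid Y^*=0,x,w)+\Pr(Y=0\mid Y^*=1,x,w)\le 1$ for all $x\in\mathcal X$, $w\in\mathcal W$; (iv) (Boundary condition) $0<p_W(x,w)<1$ for all $x\in\mathcal X$, $w\in\mathcal W$. Then for every $x\in\mathcal X$, $p^*(x)\in[L_2(x),U_2(x)]$, where $$L_2(x)=\sup_{w\in\mathcal W}\left\{\frac{p_W(x,w)-\underline p_w(x,w)}{1-\underline p_w(x,w)}\right\},\qquad U_2(x)=\inf_{w\in\mathcal W}\left\{\frac{p_W(x,w)}{\bar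 p_w(x,w)}\right\}.$$ Moreover, when $W$ is binary (i.e. $\mathcal W$ has two elements), these bounds are sharp (no tighter bounds on $p^*(x)$ are implied by the assumptions and the distribution of the observed variables $(Y,X,W)$).
   Context: Conditioning on $x,w$ means conditioning on $X=x,W=w$. $W$ is an instrument that affects only the misreporting probabilities $\Pr(Y=1-y\mid Y^*=y,\cdot)$, not the true outcome. *)

(* Defs.v *)
(* Pointwise (in x, w) model of the conditional distribution
   of (Y*, Y) given X = x, W = w, parametrized by
     q x w  = Pr(Y* = 1 | X = x, W = w)
     a0 x w = Pr(Y = 1 | Y* = 0, X = x, W = w)   (misreporting of a 0)
     a1 x w = Pr(Y = 0 | Y* = 1, X = x, W = w)   (misreporting of a 1)
   and pstar x = Pr(Y* = 1 | X = x).  The support of W is a finite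
   duplicate-free nonempty list of reals Wset. *)
From HB Require Import structures.
From mathcomp Require Import all_boot all_order all_algebra.
Set Implicit Arguments. Unset Strict Implicit. Unset Printing Implicit Defensive.
Import Order.TTheory GRing.Theory Num.Theory.
Local Open Scope ring_scope.

Section Defs.
Variables (R : realFieldType) (X : Type).

Definition valid_model (Wset : seq R) (pstar : X -> R) (q a0 a1 : X -> R -> R) :=
  (forall x, 0 <= pstar x <= 1) /\
  (forall x w, w \in Wset -> [/\ 0 <= q x w <= 1, 0 <= a0 x w <= 1 & 0 <= a1 x w <= 1]).

(* observed p_W(x,w) = Pr(Y = 1 | X = x, W = w), by the law of total probability *)
Definition pW (q a0 a1 : X -> R -> R) (x : X) (w : R) : R :=
  a0 x w * (1 - q x w) + (1 - a1 x w) * q x w.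

(* underline p_w(x,w) = min_{w' in Wset, w' <= w} p(x,w'); w itself is in the range *)
Definition plow (Wset : seq R) (p : X -> R -> R) (x : X) (w : R) : R :=
  \big[Num.min/p x w]_(v <- Wset | v <= w) p x v.

Definition pup (Wset : seq R) (p : X -> R -> R) (x : X) (w : R) : R :=
  \big[Num.max/p x w]_(v <- Wset | v <= w) p x v.

(* L2(x) = max_{w in Wset} (p(x,w) - plow(x,w)) / (1 - plow(x,w));
   the seed of the big max is one of the terms (Wset nonempty), so this is the max *)
Definition L2 (Wset : seq R) (p : X -> R -> R) (x : X) : R :=
  let f w := (p x w - plow Wset p x w) / (1 - plow Wset p x w) in
  \big[Num.max/f (head 0 Wset)]_(w <- Wset) f w.

Definition U2 (Wset : seq R) (p : X -> R -> R) (x : X) : R :=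
  let f w := p x w / pup Wset p x w in
  \big[Num.min/f (head 0 Wset)]_(w <- Wset) f w.

Definition assumptions (Wset : seq R) (pstar : X -> R) (q a0 a1 : X -> R -> R) :=
  [/\
      (forall x w, w \in Wset -> q x w = pstar x),
      (forall x w1 w2, w1 \in Wset -> w2 \in Wset -> w2 < w1 ->
         a0 x w1 <= a0 x w2 /\ a1 x w1 <= a1 x w2),
      (forall x w, w \in Wset -> a0 x w + a1 x w <= 1) &
      (forall x w, w \in Wset -> 0 < pW q a0 a1 x w < 1)].

End Defs.

(* Main.v *)
Require Import Defs.
From HB Require Import structures.
From Stdlib Require Import ClassicalEpsilon.
From mathcomp Require Import all_boot all_order all_algebra.
From mathcomp Require Import ring lra.
Import Order.TTheory GRing.Theory Num.Theory.
Local Open Scope ring_scope.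
Section B.
Variable R : realFieldType.
Variables (I : eqType).
Lemma bigmin_le_idx (r : seq I) (Pr : pred I) (F : I -> R) idx :
  \big[Num.min/idx]_(i <- r | Pr i) F i <= idx.
Proof. elim: r => [|i r IH]; rewrite ?big_nil // big_cons; case: ifP => // _.
by rewrite ge_min IH orbT. Qed.
Lemma bigmin_le_F (r : seq I) (Pr : pred I) (F : I -> R) idx j :
  j \in r -> Pr j -> \big[Num.min/idx]_(i <- r | Pr i) F i <= F j.
Proof. elim: r => [|i r IH] //; rewrite big_cons inE => /orP[/eqP<-|jr] Pj.
  by rewrite Pj ge_min lexx.
case: ifP => _; last exact: IH. by rewrite ge_min IH ?orbT. Qed.
Lemma bigmax_ge_idx (r : seq I) (Pr : pred I) (F : I -> R) idx :
  idx <= \big[Num.max/idx]_(i <- r | Pr i) F i.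
Proof. elim: r => [|i r IH]; rewrite ?big_nil // big_cons; case: ifP => // _.
by rewrite le_max IH orbT. Qed.
Lemma bigmax_ge_F (r : seq I) (Pr : pred I) (F : I -> R) idx j :
  j \in r -> Pr j -> F j <= \big[Num.max/idx]_(i <- r | Pr i) F i.
Proof. elim: r => [|i r IH] //; rewrite big_cons inE => /orP[/eqP<-|jr] Pj.
  by rewrite Pj le_max lexx.
case: ifP => _; last exact: IH. by rewrite le_max IH ?orbT. Qed.
Lemma bigmin_att (r : seq I) (Pr : pred I) (F : I -> R) idx :
  \big[Num.min/idx]_(i <- r | Pr i) F i = idx \/
  exists2 j, j \in r & Pr j /\ \big[Num.min/idx]_(i <- r | Pr i) F i = F j.
Proof. elim: r => [|i r IH]; rewrite ?big_nil; first by left.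
rewrite big_cons; case: ifP => Pi.
  case: leP => _; first by right; exists i; rewrite ?inE ?eqxx.
  case: IH => [->|[j jr [Pj ->]]]; first by left.
  by right; exists j; rewrite ?inE ?jr ?orbT.
case: IH => [->|[j jr [Pj ->]]]; first by left.
by right; exists j; rewrite ?inE ?jr ?orbT.
Qed.
Lemma bigmax_att (r : seq I) (Pr : pred I) (F : I -> R) idx :
  \big[Num.max/idx]_(i <- r | Pr i) F i = idx \/
  exists2 j, j \in r & Pr j /\ \big[Num.max/idx]_(i <- r | Pr i) F i = F j.
Proof. elim: r => [|i r IH]; rewrite ?big_nil; first by left.
rewrite big_cons; case: ifP => Pi.
  case: leP => _; last by right; exists i; rewrite ?inE ?eqxx.
  case: IH => [->|[j jr [Pj ->]]]; first by left.
  by right; exists j; rewrite ?inE ?jr ?orbT.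
case: IH => [->|[j jr [Pj ->]]]; first by left.
by right; exists j; rewrite ?inE ?jr ?orbT.
Qed.
Lemma bigmax_le (r : seq I) (Pr : pred I) (F : I -> R) idx c :
  idx <= c -> (forall j, j \in r -> Pr j -> F j <= c) ->
  \big[Num.max/idx]_(i <- r | Pr i) F i <= c.
Proof. move=> h H; case: (bigmax_att r Pr F idx) => [->//|[j jr [Pj ->]]]; exact: H. Qed.
Lemma bigmin_ge (r : seq I) (Pr : pred I) (F : I -> R) idx c :
  c <= idx -> (forall j, j \in r -> Pr j -> c <= F j) ->
  c <= \big[Num.min/idx]_(i <- r | Pr i) F i.
Proof. move=> h H; case: (bigmin_att r Pr F idx) => [->//|[j jr [Pj ->]]]; exact: H. Qed.
Lemma part1_low (p a0v a1v a0w a1w : R) :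
  0 <= p <= 1 -> a0w <= a0v -> a1w <= a1v -> 0 <= a1w -> a0v + a1v <= 1 ->
  (a0w * (1 - p) + (1 - a1w) * p) - (a0v * (1 - p) + (1 - a1v) * p)
    <= p * (1 - (a0v * (1 - p) + (1 - a1v) * p)).
Proof. move=> /andP[p0 p1] h0 h1 h2 h3.
have e : p * (1 - (a0v * (1 - p) + (1 - a1v) * p)) -
  ((a0w * (1 - p) + (1 - a1w) * p) - (a0v * (1 - p) + (1 - a1v) * p)) =
  (1-p)*(a0v - a0w) + p*(1-p)*(1 - a1v - a0v) + a1w * p by ring.
rewrite -subr_ge0 e; apply: addr_ge0; [apply: addr_ge0|];
 apply: mulr_ge0; rewrite ?mulr_ge0 ?subr_ge0 //; lra.
Qed.
Lemma part1_up (p a0v a1v a0w a1w : R) :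
  0 <= p <= 1 -> 0 <= a0w -> a1w <= a1v -> a0v + a1v <= 1 ->
  p * (a0v * (1 - p) + (1 - a1v) * p) <= a0w * (1 - p) + (1 - a1w) * p.
Proof. move=> /andP[p0 p1] h0 h1 h2.
have e : a0w * (1 - p) + (1 - a1w) * p - p * (a0v * (1 - p) + (1 - a1v) * p) =
  a0w*(1-p) + p*(a1v-a1w) + p*(1-p)*(1-a1v-a0v) by ring.
rewrite -subr_ge0 e; apply: addr_ge0; [apply: addr_ge0|];
 apply: mulr_ge0; rewrite ?mulr_ge0 ?subr_ge0 //; lra.
Qed.
End B.
Theorem part1 (R : realFieldType) (X : Type) (Wset : seq R)
  (pstar : X -> R) (q a0 a1 : X -> R -> R) :
  Wset != [::] ->
  valid_model Wset pstar q a0 a1 ->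
  assumptions Wset pstar q a0 a1 ->
  (forall x : X, L2 Wset (pW q a0 a1) x <= pstar x <= U2 Wset (pW q a0 a1) x).
Proof.
move=> Wn [Vp Vw] [Hi Hii Hiii Hiv] x.
have hd : head 0 Wset \in Wset.
  case E: Wset => [|w s]; first by rewrite E in Wn. by rewrite inE eqxx.
have key : forall w v, w \in Wset -> v \in Wset -> v <= w ->
  [/\ a0 x w <= a0 x v, a1 x w <= a1 x v, a0 x v + a1 x v <= 1,
      0 <= a1 x w /\ 0 <= a0 x w & 0 <= pstar x <= 1].
  move=> w v wW vW; rewrite le_eqVlt => /orP[/eqP->|vw].
    case: (Vw x w wW) => _ /andP[? ?] /andP[? ?].
    split => //; first exact: Hiii; exact: Vp.
  have [h1 h2] := Hii x w v wW vW vw.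
  case: (Vw x w wW) => _ /andP[? ?] /andP[? ?].
  split => //; first exact: Hiii; exact: Vp.
have pWe : forall w, w \in Wset -> pW q a0 a1 x w =
   a0 x w * (1 - pstar x) + (1 - a1 x w) * pstar x.
  by move=> w wW; rewrite /pW Hi.
have L : forall j, j \in Wset ->
  (pW q a0 a1 x j - plow Wset (pW q a0 a1) x j) / (1 - plow Wset (pW q a0 a1) x j) <= pstar x.
  move=> j jW.
  have [v vW [vj ->]] : exists2 v, v \in Wset & v <= j /\ plow Wset (pW q a0 a1) x j = pW q a0 a1 x v.
    case: (@bigmin_att _ _ Wset (fun v => v <= j) (pW q a0 a1 x) (pW q a0 a1 x j)) => [E|[v vW [vj E]]].
      by exists j; rewrite // /plow E.
    by exists v.
  have [/andP[_ lt1]] := Hiv x v vW.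
  rewrite ler_pdivrMr ?subr_gt0 // !pWe //.
  case: (key j v jW vW vj) => h1 h2 h3 [h4 h5] h6; exact: part1_low.
have U : forall j, j \in Wset ->
  pstar x <= pW q a0 a1 x j / pup Wset (pW q a0 a1) x j.
  move=> j jW.
  have [v vW [vj ->]] : exists2 v, v \in Wset & v <= j /\ pup Wset (pW q a0 a1) x j = pW q a0 a1 x v.
    case: (@bigmax_att _ _ Wset (fun v => v <= j) (pW q a0 a1 x) (pW q a0 a1 x j)) => [E|[v vW [vj E]]].
      by exists j; rewrite // /pup E.
    by exists v.
  have [/andP[gt0 _]] := Hiv x v vW.
  rewrite ler_pdivlMr // !pWe //.
  case: (key j v jW vW vj) => h1 h2 h3 [h4 h5] h6; exact: part1_up.
apply/andP; split.
  by rewrite /L2; apply: bigmax_le => [|j jW _]; apply: L.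
by rewrite /U2; apply: bigmin_ge => [|j jW _]; apply: U.
Qed.

Section Sharp.
Variables (R : realFieldType) (X : Type) (Wset : seq R)
  (pstar : X -> R) (q a0 a1 : X -> R -> R).
Hypothesis V : valid_model Wset pstar q a0 a1.
Hypothesis A : assumptions Wset pstar q a0 a1.

Definition dec (x x' : X) := excluded_middle_informative (x' = x).

Lemma patch (x : X) (t : R) (A0 A1 : R -> R) :
  0 <= t <= 1 ->
  (forall w, w \in Wset -> [/\ 0 <= A0 w <= 1, 0 <= A1 w <= 1, A0 w + A1 w <= 1 &
       A0 w * (1 - t) + (1 - A1 w) * t = pW q a0 a1 x w]) ->
  (forall w1 w2, w1 \in Wset -> w2 \in Wset -> w2 < w1 -> A0 w1 <= A0 w2 /\ A1 w1 <= A1 w2) ->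
  exists (pstar' : X -> R) (q' a0' a1' : X -> R -> R),
       [/\ valid_model Wset pstar' q' a0' a1',
           assumptions Wset pstar' q' a0' a1',
           (forall x' w, w \in Wset -> pW q' a0' a1' x' w = pW q a0 a1 x' w) &
           pstar' x = t].
Proof.
move=> t01 Hl Hm.
case: V => [Vp Vw]; case: A => [Hi Hii Hiii Hiv].
exists (fun x' => if dec x x' then t else pstar x'),
  (fun x' w => if dec x x' then t else q x' w),
  (fun x' w => if dec x x' then A0 w else a0 x' w),
  (fun x' w => if dec x x' then A1 w else a1 x' w).
have EpW : forall x' w, w \in Wset ->
  pW (fun x' w => if dec x x' then t else q x' w)
     (fun x' w => if dec x x' then A0 w else a0 x' w)
     (fun x' w => if dec x x' then A1 w else a1 x' w) x' w = pW q a0 a1 x' w.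
  move=> x' w wW; case: (Hl w wW) => _ _ _ E; rewrite /pW.
  case: (dec x x') => [e|//]; subst x'; exact: E.
split.
- split=> [x'|x' w wW] /=; case: (dec x x') => [e|ne] /=.
  + exact: t01.
  + exact: Vp.
  + by subst x'; case: (Hl w wW) => *; split.
  + exact: Vw.
- split.
  + move=> x' w wW /=; case: (dec x x') => [e|ne] //=; exact: Hi.
  + move=> x' w1 w2 w1W w2W lt /=; case: (dec x x') => [e|ne] /=.
      exact: Hm. exact: Hii.
  + move=> x' w wW /=; case: (dec x x') => [e|ne] /=.
      by case: (Hl w wW). exact: Hiii.
  + by move=> x' w wW; rewrite EpW //; exact: Hiv.
- exact: EpW.
- by case: (dec x x) => [//|ne]; exfalso; exact: ne.
Qed.
End Sharp.

Section Sharp2.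
Variables (R : realFieldType) (X : Type) (Wset : seq R)
  (pstar : X -> R) (q a0 a1 : X -> R -> R).
Hypothesis V : valid_model Wset pstar q a0 a1.
Hypothesis A : assumptions Wset pstar q a0 a1.

Lemma sharp2 (lo hi : R) (x : X) (t : R) :
  lo \in Wset -> hi \in Wset -> lo < hi ->
  (forall w, w \in Wset -> w = lo \/ w = hi) ->
  L2 Wset (pW q a0 a1) x <= t <= U2 Wset (pW q a0 a1) x ->
  exists (pstar' : X -> R) (q' a0' a1' : X -> R -> R),
       [/\ valid_model Wset pstar' q' a0' a1',
           assumptions Wset pstar' q' a0' a1',
           (forall x' w, w \in Wset -> pW q' a0' a1' x' w = pW q a0 a1 x' w) &
           pstar' x = t].
Proof.
move=> loW hiW lohi two /andP[Lt tU].
have [Hi Hii Hiii Hiv] := A.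
have /andP[Pl0 Pl1] := Hiv x lo loW.
have /andP[Ph0 Ph1] := Hiv x hi hiW.
have plo : plow Wset (pW q a0 a1) x lo = pW q a0 a1 x lo.
  rewrite /plow; case: (@bigmin_att _ _ Wset (fun v => v <= lo) (pW q a0 a1 x) (pW q a0 a1 x lo))
    => [//|[v vW [vlo ->]]].
  case: (two v vW) => ev; subst v => //; by rewrite leNgt lohi in vlo.
have pulo : pup Wset (pW q a0 a1) x lo = pW q a0 a1 x lo.
  rewrite /pup; case: (@bigmax_att _ _ Wset (fun v => v <= lo) (pW q a0 a1 x) (pW q a0 a1 x lo))
    => [//|[v vW [vlo ->]]].
  case: (two v vW) => ev; subst v => //; by rewrite leNgt lohi in vlo.
have mhi : Num.min (pW q a0 a1 x lo) (pW q a0 a1 x hi) = plow Wset (pW q a0 a1) x hi.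
  have m1 : plow Wset (pW q a0 a1) x hi <= pW q a0 a1 x hi by apply: bigmin_le_idx.
  have m2 : plow Wset (pW q a0 a1) x hi <= pW q a0 a1 x lo.
    by apply: bigmin_le_F => //; apply: ltW.
  case: (@bigmin_att _ _ Wset (fun v => v <= hi) (pW q a0 a1 x) (pW q a0 a1 x hi))
    => [e|[v vW [_ e]]]; rewrite /plow e.
  - by rewrite /plow e in m2; case: leP => h; lra.
  - rewrite /plow e in m1 m2; case: (two v vW) => ev; subst v.
      by case: leP => h; lra.
    by case: leP => h; lra.
have Mhi : Num.max (pW q a0 a1 x lo) (pW q a0 a1 x hi) = pup Wset (pW q a0 a1) x hi.
  have m1 : pW q a0 a1 x hi <= pup Wset (pW q a0 a1) x hi by apply: bigmax_ge_idx.
  have m2 : pW q a0 a1 x lo <= pup Wset (pW q a0 a1) x hi.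
    by apply: bigmax_ge_F => //; apply: ltW.
  case: (@bigmax_att _ _ Wset (fun v => v <= hi) (pW q a0 a1 x) (pW q a0 a1 x hi))
    => [e|[v vW [_ e]]]; rewrite /pup e.
  - by rewrite /pup e in m2; case: leP => h; lra.
  - rewrite /pup e in m1 m2; case: (two v vW) => ev; subst v.
      by case: leP => h; lra.
    by case: leP => h; lra.
have hL : forall j, j \in Wset -> (pW q a0 a1 x j - plow Wset (pW q a0 a1) x j) /
   (1 - plow Wset (pW q a0 a1) x j) <= t.
  move=> j jW; apply: le_trans Lt; rewrite /L2; cbv zeta; exact: (@bigmax_ge_F _ _ _ _ _ _ _ jW).
have hU : forall j, j \in Wset -> t <= pW q a0 a1 x j / pup Wset (pW q a0 a1) x j.
  move=> j jW; apply: le_trans tU _; rewrite /U2; cbv zeta; exact: (@bigmin_le_F _ _ _ _ _ _ _ jW).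
set Pl := pW q a0 a1 x lo in Pl0 Pl1 plo pulo mhi Mhi hL hU *.
set Ph := pW q a0 a1 x hi in Ph0 Ph1 mhi Mhi hL hU *.
have F1 : 0 <= t.
  by have := hL lo loW; rewrite plo subrr mul0r.
have F2 : t <= 1.
  by have := hU lo loW; rewrite pulo divff // gt_eqF.
have F3 : Pl <= Ph -> Ph - Pl <= t * (1 - Pl).
  move=> le; have := hL hi hiW; rewrite -mhi.
  have -> : Num.min Pl Ph = Pl by case: leP => h; lra.
  by rewrite ler_pdivrMr ?subr_gt0.
have F4 : Ph <= Pl -> t * Pl <= Ph.
  move=> le; have := hU hi hiW; rewrite -Mhi.
  have -> : Num.max Pl Ph = Pl by case: leP => h; lra.
  by rewrite ler_pdivlMr.
have t01 : 0 <= t <= 1 by rewrite F1 F2.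
have Pw : forall w, w \in Wset -> 0 < pW q a0 a1 x w < 1 by move=> w wW; exact: Hiv.
have mono : forall (B0 B1 : R -> R), B0 hi <= B0 lo -> B1 hi <= B1 lo ->
   forall w1 w2, w1 \in Wset -> w2 \in Wset -> w2 < w1 -> B0 w1 <= B0 w2 /\ B1 w1 <= B1 w2.
  move=> B0 B1 h0 h1 w1 w2 w1W w2W lt.
  case: (two w1 w1W) => e1; case: (two w2 w2W) => e2; subst w1 w2 => //.
  all: try by rewrite ltxx in lt.
  all: try by split.
  by have := lt_trans lt lohi; rewrite ltxx.
case: (boolP ((Pl <= Ph) && (0 < t))) => [/andP[le tpos] | nc].
  apply: (@patch _ _ _ _ _ _ _ V A x t (fun _ => Pl)
     (fun w => 1 - (pW q a0 a1 x w - Pl * (1 - t)) / t)) => //.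
  - move=> w wW.
    have [h1 h2] : Pl <= pW q a0 a1 x w /\ pW q a0 a1 x w - Pl <= t * (1 - Pl).
      case: (two w wW) => ->; split => //; last exact: F3.
      by rewrite subrr mulr_ge0 // subr_ge0 ltW.
    have /andP[P0 P1] := Pw w wW.
    have tn0 : t != 0 by rewrite gt_eqF.
    set z := (pW q a0 a1 x w - Pl * (1 - t)) / t.
    have z0 : 0 <= z by rewrite /z divr_ge0 ?(ltW tpos) //; nra.
    have z1 : z <= 1 by rewrite /z ler_pdivrMr // mul1r; nra.
    have zP : Pl <= z by rewrite /z ler_pdivlMr //; nra.
    split.
    + by rewrite (ltW Pl0) (ltW Pl1).
    + apply/andP; split; lra.
    + lra.
    + have ez : z * t = pW q a0 a1 x w - Pl * (1 - t) by rewrite /z divfK.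
      rewrite (_ : 1 - (1 - z) = z); last ring.
      rewrite ez; ring.
  - apply: mono => //.
    rewrite lerD2l lerN2 ler_pM2r ?invr_gt0 // lerD2r; exact: le.
have [le tlt] : Ph <= Pl /\ t < 1.
  case: (leP Pl Ph) => h.
    have t0 : t = 0.
      apply/le_anti; rewrite F1 andbT.
      by move: nc; rewrite h /= -leNgt.
    have h2 := F3 h; rewrite t0 mul0r in h2.
    split; first lra. by rewrite t0 ltr01.
  split; first exact: ltW.
  have := F4 (ltW h) => h2.
  have : t * Pl < 1 * Pl by lra.
  by rewrite ltr_pM2r.
apply: (@patch _ _ _ _ _ _ _ V A x t (fun w => (pW q a0 a1 x w - Pl * t) / (1 - t))
     (fun _ => 1 - Pl)) => //.
- move=> w wW.
  have [h1 h2] : pW q a0 a1 x w <= Pl /\ Pl * t <= pW q a0 a1 x w.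
    case: (two w wW) => ->; split => //; last by rewrite mulrC; exact: F4.
    exact: ler_piMr (ltW Pl0) F2.
  have /andP[P0 P1] := Pw w wW.
  have t1 : 0 < 1 - t by rewrite subr_gt0.
  have tn0 : 1 - t != 0 by rewrite gt_eqF.
  have A0le : (pW q a0 a1 x w - Pl * t) / (1 - t) <= Pl.
    rewrite ler_pdivrMr //. nra.
  split.
  + apply/andP; split; first by rewrite divr_ge0 ?subr_ge0 // ltW.
    lra.
  + apply/andP; split; lra.
  + lra.
  + rewrite divfK //. ring.
- apply: mono => //.
  rewrite ler_pM2r ?invr_gt0 ?subr_gt0 // lerD2r; exact: le.
Qed.
End Sharp2.

Theorem proposition2 (R : realFieldType) (X : Type) (Wset : seq R)
  (pstar : X -> R) (q a0 a1 : X -> R -> R) :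
  uniq Wset -> Wset != [::] ->
  valid_model Wset pstar q a0 a1 ->
  assumptions Wset pstar q a0 a1 ->
  (* bounds *)
  (forall x : X, L2 Wset (pW q a0 a1) x <= pstar x <= U2 Wset (pW q a0 a1) x) /\
  (* sharpness for binary W *)
  (size Wset = 2%N ->
   forall (x : X) (t : R),
     L2 Wset (pW q a0 a1) x <= t <= U2 Wset (pW q a0 a1) x ->
     exists (pstar' : X -> R) (q' a0' a1' : X -> R -> R),
       [/\ valid_model Wset pstar' q' a0' a1',
           assumptions Wset pstar' q' a0' a1',
           (forall x' w, w \in Wset -> pW q' a0' a1' x' w = pW q a0 a1 x' w) &
           pstar' x = t]).
Proof.
move=> U Wn V A; split; first exact: part1.
move=> s2 x t Ht.
have [w1 [w2 E]] : exists w1 w2, Wset = [:: w1; w2].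
  move: s2; case: (Wset) => [|a [|b [|c l]]] //= _; by exists a, b.
have two : forall w, w \in Wset -> w = w1 \/ w = w2.
  by move=> w; rewrite E !inE => /orP[/eqP|/eqP]; auto.
have in1 : w1 \in Wset by rewrite E !inE eqxx.
have in2 : w2 \in Wset by rewrite E !inE eqxx orbT.
have ne : w1 != w2 by move: U; rewrite E /= inE andbT.
case: (ltgtP w1 w2) => h.
- exact: (@sharp2 _ _ _ _ _ _ _ V A _ _ x t in1 in2 h two Ht).
- apply: (@sharp2 _ _ _ _ _ _ _ V A _ _ x t in2 in1 h _ Ht) => w wW; case: (two w wW); auto.
- by rewrite h eqxx in ne.
Qed.
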